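(* Realize $\mathrm{SU}(2)\times\mathbb{R}$ as the group of matrices $(A,B,v)=\begin{pmatrix}A&B&0\\-\overline{B}&\overline{A}&0\\0&0&e^v\end{pmatrix}$ with $A,B\in\mathbb{C}$, $|A|^2+|B|^2=1$, $v\in\mathbb{R}$, and let $E_1=\tfrac12(e_{12}-e_{21})$, $E_2=\tfrac{i}{2}(e_{12}+e_{21})$, $E_3=\tfrac{i}{2}(e_{11}-e_{22})$, $E_4=e_{33}$ (with $e_{jk}$ the $3\times3$ matrix units), and $e_1=E_1$, $e_2=E_4-E_3$, $e_3=E_2$, $e_4=E_3$. For $\alpha_1^2+\alpha_2^2+\alpha_3^2=1$ and $\beta\in\mathbb{R}$ let $$\tilde\gamma_1(t)=\tilde\gamma_1(\alpha_1,\alpha_2,\alpha_3,\beta;t)=\exp\bigl(t(\alpha_1e_1+\alpha_2e_2+\alpha_3e_3+\beta e_4)\bigr)\exp(-t\beta e_4)$$ (the arclength-parametrized geodesics through $\mathrm{Id}$ of the left-invariant sub-Riemannian metric $d_1$ defined by $\mathrm{span}(e_1,e_2,e_3)$ with orthonormal basis $e_1,e_2,e_3$). Put $w_1=\sqrt{1-\alpha_2^2+(\beta-\alpha_2)^2}$, $n_1=\cos\frac{w_1t}{2}$, $m_1=\frac{1}{w_1}\sin\frac{w_1t}{2}$. If $\alpha_2\neq\pm1$, then $\tilde\gamma_1(t)=(A,B,v)(t)$ with $$A=\Bigl(n_1\cos\tfrac{\beta t}{2}+(\beta-\alpha_2)m_1\sin\tfrac{\beta t}{2}\Bigr)+\Bigl((\beta-\alpha_2)m_1\cos\tfrac{\beta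 t}{2}-n_1\sin\tfrac{\beta t}{2}\Bigr)i,$$ $$B=m_1\sqrt{1-\alpha_2^2}\Bigl[\cos\bigl(\tfrac{\beta t}{2}+\varphi_0\bigr)+i\sin\bigl(\tfrac{\beta t}{2}+\varphi_0\bigr)\Bigr],\qquad v=\alpha_2t,$$ where $\cos\varphi_0=\alpha_1/\sqrt{1-\alpha_2^2}$, $\sin\varphi_0=\alpha_3/\sqrt{1-\alpha_2^2}$. If $\alpha_2=\pm1$, then $\tilde\gamma_1(t)=(A,B,v)(t)$ with $A=e^{-i\alpha_2t/2}$, $B\equiv0$, $v=\alpha_2t$.
   Context: The matrices $E_1,\dots,E_4$ satisfy $[E_1,E_2]=E_3$, $[E_2,E_3]=E_1$, $[E_3,E_1]=E_2$, $[E_i,E_4]=0$. *)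

(* Defs.v *)
From HB Require Import structures.
From mathcomp Require Import all_boot all_order all_algebra.
From mathcomp Require Import all_classical all_reals all_analysis.
From mathcomp Require Import complex.
Import Order.TTheory GRing.Theory Num.Theory.
Import numFieldNormedType.Exports.
Set Implicit Arguments.
Unset Strict Implicit.
Unset Printing Implicit Defensive.
Local Open Scope ring_scope.
Local Open Scope classical_set_scope.

Section Defs.
Variable R : realType.
Local Notation C := (R[i]).

Definition rC (x : R) : C := Complex x 0.
Definition iC : C := Complex 0 1.

(* indices 1,2,3 of 3x3 matrices (0-based ordinals) *)
Definition o1 : 'I_3 := @Ordinal 3 0 isT.
Definition o2 : 'I_3 := @Ordinal 3 1 isT.
Definition o3 : 'I_3 := @Ordinal 3 2 isT.

Definition eu (j k : 'I_3) : 'M[C]_3 := delta_mx j k.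

Definition E1 : 'M[C]_3 := rC (2^-1) *: (eu o1 o2 - eu o2 o1).
Definition E2 : 'M[C]_3 := (rC (2^-1) * iC) *: (eu o1 o2 + eu o2 o1).
Definition E3 : 'M[C]_3 := (rC (2^-1) * iC) *: (eu o1 o1 - eu o2 o2).
Definition E4 : 'M[C]_3 := eu o3 o3.

Definition e1 : 'M[C]_3 := E1.
Definition e2 : 'M[C]_3 := E4 - E3.
Definition e3 : 'M[C]_3 := E2.
Definition e4 : 'M[C]_3 := E3.

Definition expm_partial (M : 'M[C]_3) (N : nat) : 'M[C]_3 :=
  \sum_(k < N) rC (k`!%:R)^-1 *: M ^+ k.

Definition expm (M : 'M[C]_3) : 'M[C]_3 :=
  \matrix_(i < 3, j < 3)
    Complex (lim ((fun N : nat => @complex.Re R (expm_partial M N i j)) @ \oo) : R)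
            (lim ((fun N : nat => @complex.Im R (expm_partial M N i j)) @ \oo) : R).

Definition SU2R (A B : C) (v : R) : 'M[C]_3 :=
  \matrix_(i < 3, j < 3)
    if (i == o1) && (j == o1) then A
    else if (i == o1) && (j == o2) then B
    else if (i == o2) && (j == o1) then - conjc B
    else if (i == o2) && (j == o2) then conjc A
    else if (i == o3) && (j == o3) then rC (expR v)
    else 0.

Definition gamma1 (a1 a2 a3 b t : R) : 'M[C]_3 :=
  expm (rC t *: (rC a1 *: e1 + rC a2 *: e2 + rC a3 *: e3 + rC b *: e4))
  *m expm (rC (- (t * b)) *: e4).

Definition w1 (a2 b : R) : R := Num.sqrt (1 - a2 ^+ 2 + (b - a2) ^+ 2).
Definition n1 (a2 b t : R) : R := cos (w1 a2 b * t / 2).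
Definition m1 (a2 b t : R) : R := (w1 a2 b)^-1 * sin (w1 a2 b * t / 2).

End Defs.

(* Main.v *)
Require Import Defs.
From HB Require Import structures.
From mathcomp Require Import all_boot all_order all_algebra.
From mathcomp Require Import all_classical all_reals all_analysis.
From mathcomp Require Import complex.
From mathcomp Require Import ring lra.
Import Order.TTheory GRing.Theory Num.Theory.
Import numFieldNormedType.Exports.
Local Open Scope ring_scope.

Section S.
Variable R : realType.
Local Notation C := (R[i]).

Lemma cmul (a b c d : R) : (Complex a b : C) * Complex c d = Complex (a*c - b*d) (a*d + b*c). Proof. by []. Qed.
Lemma cadd (a b c d : R) : (Complex a b : C) + Complex c d = Complex (a+c) (b+d). Proof. by []. Qed.

Definition G (x0 y0 z0 al be de : R) : 'M[C]_3 := \matrix_(i < 3, j < 3)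
  if (i==o1)&&(j==o1) then Complex al (be*x0)
  else if (i==o1)&&(j==o2) then Complex (be*y0) (be*z0)
  else if (i==o2)&&(j==o1) then Complex (be*(-y0)) (be*z0)
  else if (i==o2)&&(j==o2) then Complex al (be*(-x0))
  else if (i==o3)&&(j==o3) then Complex de 0 else 0.

Lemma GM x0 y0 z0 a b d a' b' d' : x0^+2 + y0^+2 + z0^+2 = 1 ->
  G x0 y0 z0 a b d *m G x0 y0 z0 a' b' d' = G x0 y0 z0 (a*a' - b*b') (a*b'+b*a') (d*d').
Proof.
move=> hu.
have withu (l r k : R) : l = r + k * (x0^+2+y0^+2+z0^+2 - 1) -> l = r.
  by rewrite hu subrr mulr0 addr0.
apply/matrixP => i j; rewrite !mxE !big_ord_recr big_ord0 /= !mxE.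
case: i => [[|[|[|i]]] Hi] //; case: j => [[|[|[|j]]] Hj] //=.
all: apply/eqP; rewrite eq_complex /=; apply/andP; split; apply/eqP.
all: try ring.
all: apply (withu _ _ (-(b*b'))); ring.
Qed.

Lemma fact_neq0 k : (k`!%:R : R) != 0.
Proof. by rewrite pnatr_eq0 -lt0n fact_gt0. Qed.

Lemma ccE u k : cos_coeff u k * k`!%:R = (~~ odd k)%:R * (-1)^+k./2 * u^+k :> R.
Proof. by rewrite /cos_coeff /= divfK ?fact_neq0. Qed.
Lemma scE u k : sin_coeff u k * k`!%:R = (odd k)%:R * (-1)^+k.-1./2 * u^+k :> R.
Proof. by rewrite /sin_coeff /= divfK ?fact_neq0. Qed.

Lemma cosS u k : cos_coeff u k.+1 * k.+1`!%:R = - (sin_coeff u k * k`!%:R) * u :> R.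
Proof.
rewrite ccE scE /= negbK uphalf_half.
case/boolP: (odd k) => ok.
  have hk : k.-1./2 = k./2.
    by rewrite -{1}(odd_double_half k) ok add1n /= doubleK.
  rewrite hk /= exprS exprSr; ring.
by rewrite /=; ring.
Qed.

Lemma sinS u k : sin_coeff u k.+1 * k.+1`!%:R = cos_coeff u k * k`!%:R * u :> R.
Proof. by rewrite ccE scE /= exprSr; ring. Qed.


Definition rC' (x : R) : C := Complex x 0.

Lemma G1 x0 y0 z0 : G x0 y0 z0 1 0 1 = 1.
Proof.
apply/matrixP => i j; rewrite !mxE.
case: i => [[|[|[|i]]] Hi] //; case: j => [[|[|[|j]]] Hj] //=;
  by rewrite ?mul0r.
Qed.

Lemma G0 x0 y0 z0 : G x0 y0 z0 0 0 0 = 0.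
Proof.
apply/matrixP => i j; rewrite !mxE.
case: i => [[|[|[|i]]] Hi] //; case: j => [[|[|[|j]]] Hj] //=;
  by rewrite ?mul0r ?oppr0.
Qed.

Lemma GD x0 y0 z0 a b d a' b' d' :
  G x0 y0 z0 a b d + G x0 y0 z0 a' b' d' = G x0 y0 z0 (a+a') (b+b') (d+d').
Proof.
apply/matrixP => i j; rewrite !mxE.
case: i => [[|[|[|i]]] Hi] //; case: j => [[|[|[|j]]] Hj] //=.
all: apply/eqP; rewrite eq_complex /=; apply/andP; split; apply/eqP; ring.
Qed.

Lemma GZ x0 y0 z0 r a b d :
  rC r *: G x0 y0 z0 a b d = G x0 y0 z0 (r*a) (r*b) (r*d).
Proof.
apply/matrixP => i j; rewrite !mxE.
case: i => [[|[|[|i]]] Hi] //; case: j => [[|[|[|j]]] Hj] //=.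
all: apply/eqP; rewrite eq_complex /=; apply/andP; split; apply/eqP; ring.
Qed.

Lemma Gpow x0 y0 z0 u d k : x0^+2 + y0^+2 + z0^+2 = 1 ->
  (G x0 y0 z0 0 u d)^+k = G x0 y0 z0 (cos_coeff u k * k`!%:R) (sin_coeff u k * k`!%:R) (d^+k).
Proof.
move=> hu; elim: k => [|k IH].
  rewrite expr0 ccE scE /= !expr0 -[LHS](G1 x0 y0 z0); congr G; ring.
rewrite exprSr IH -mulmxE GM // cosS sinS exprSr.
congr G; ring.
Qed.

Lemma Gpartial x0 y0 z0 u d N : x0^+2 + y0^+2 + z0^+2 = 1 ->
  expm_partial (G x0 y0 z0 0 u d) N =
  G x0 y0 z0 (\sum_(k < N) cos_coeff u k) (\sum_(k < N) sin_coeff u k)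
     (\sum_(k < N) (k`!%:R)^-1 * d^+k).
Proof.
move=> hu; rewrite /expm_partial; elim: N => [|N IH].
  by rewrite !big_ord0 G0.
rewrite !big_ord_recr /= IH Gpow // GZ GD.
by rewrite ![_^-1 * (_ * _)]mulrCA !mulVf ?fact_neq0 ?mulr1.
Qed.


Lemma lim_cos (u : R) : lim ((fun N => \sum_(k < N) cos_coeff u k) @ \oo)%classic = cos u.
Proof.
have -> : (fun N => \sum_(k < N) cos_coeff u k) = series (cos_coeff u).
  by apply/funext => N; rewrite /series /= big_mkord.
by rewrite cos.unlock.
Qed.

Lemma lim_sinM (u c : R) : lim ((fun N => (\sum_(k < N) sin_coeff u k) * c) @ \oo)%classic = sin u * c.
Proof.
have -> : (fun N => (\sum_(k < N) sin_coeff u k) * c) = (series (sin_coeff u) \* cst c).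
  by apply/funext => N; rewrite /series /= big_mkord.
rewrite limM; last exact: is_cvg_cst.
  by rewrite lim_cst // sin.unlock.
exact: is_cvg_series_sin_coeff.
Qed.

Lemma lim_exp (d : R) : lim ((fun N => \sum_(k < N) (k`!%:R)^-1 * d^+k) @ \oo)%classic = expR d.
Proof.
have -> : (fun N => \sum_(k < N) (k`!%:R)^-1 * d^+k) = pseries (fun k => (k`!%:R)^-1) d.
  by apply/funext => N; rewrite /pseries /series /= big_mkord.
by rewrite expRE.
Qed.

Lemma expmG x0 y0 z0 u d : x0^+2 + y0^+2 + z0^+2 = 1 ->
  expm (G x0 y0 z0 0 u d) = G x0 y0 z0 (cos u) (sin u) (expR d).
Proof.
move=> hu.
have Ep : expm_partial (G x0 y0 z0 0 u d) = fun N =>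
  G x0 y0 z0 (\sum_(k < N) cos_coeff u k) (\sum_(k < N) sin_coeff u k)
     (\sum_(k < N) (k`!%:R)^-1 * d^+k).
  by apply/funext => N; rewrite Gpartial.
apply/matrixP => i j; rewrite /expm Ep !mxE.
under eq_fun do rewrite mxE.
under [X in Complex _ (limn X)]eq_fun do rewrite mxE.
case: i => [[|[|[|i]]] Hi] //; case: j => [[|[|[|j]]] Hj] //=.
all: by rewrite ?lim_cos ?lim_sinM ?lim_exp ?(lim_cst (@Rhausdorff R)).
Qed.


Lemma X_G (a1 a2 a3 b t x0 y0 z0 u : R) :
  u*x0 = t*(b-a2)/2 -> u*y0 = t*a1/2 -> u*z0 = t*a3/2 ->
  rC t *: (rC a1 *: e1 R + rC a2 *: e2 R + rC a3 *: e3 R + rC b *: e4 R)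
  = G x0 y0 z0 0 u (t*a2).
Proof.
move=> hx hy hz.
apply/matrixP => i j; rewrite /e1 /e2 /e3 /e4 /E1 /E2 /E3 /E4 /eu !mxE.
case: i => [[|[|[|i]]] Hi] //; case: j => [[|[|[|j]]] Hj] //=.
all: apply/eqP; rewrite eq_complex /=; apply/andP; split; apply/eqP.
all: rewrite ?mulrN ?hx ?hy ?hz; ring.
Qed.

Lemma e4_G (t b : R) : rC (-(t*b)) *: e4 R = G 1 0 0 0 (-(t*b)/2) 0.
Proof.
apply/matrixP => i j; rewrite /e4 /E3 /eu !mxE.
case: i => [[|[|[|i]]] Hi] //; case: j => [[|[|[|j]]] Hj] //=.
all: apply/eqP; rewrite eq_complex /=; apply/andP; split; apply/eqP; ring.
Qed.

End S.

Theorem theorem4 (R : realType) (a1 a2 a3 b : R) :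
  a1 ^+ 2 + a2 ^+ 2 + a3 ^+ 2 = 1 ->
  (a2 != 1 -> a2 != -1 ->
   forall phi0 : R,
     cos phi0 = a1 / Num.sqrt (1 - a2 ^+ 2) ->
     sin phi0 = a3 / Num.sqrt (1 - a2 ^+ 2) ->
     forall t : R,
       gamma1 a1 a2 a3 b t =
       SU2R
         (Complex (n1 a2 b t * cos (b * t / 2) + (b - a2) * m1 a2 b t * sin (b * t / 2))
                  ((b - a2) * m1 a2 b t * cos (b * t / 2) - n1 a2 b t * sin (b * t / 2)))
         (Complex (m1 a2 b t * Num.sqrt (1 - a2 ^+ 2) * cos (b * t / 2 + phi0))
                  (m1 a2 b t * Num.sqrt (1 - a2 ^+ 2) * sin (b * t / 2 + phi0)))
         (a2 * t))
  /\
  ((a2 = 1 \/ a2 = -1) ->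
   forall t : R,
     gamma1 a1 a2 a3 b t =
     SU2R (Complex (cos (- (a2 * t) / 2)) (sin (- (a2 * t) / 2))) 0 (a2 * t)).
Proof.
move=> hs.
have cv t : cos (-(t*b)/2) = cos (b*t/2).
  by rewrite (_ : -(t*b)/2 = -(b*t/2)) ?cosN //; ring.
have sv t : sin (-(t*b)/2) = - sin (b*t/2).
  by rewrite (_ : -(t*b)/2 = -(b*t/2)) ?sinN //; ring.
have u2 : (1:R)^+2 + 0^+2 + 0^+2 = 1 by ring.
split.
{ move=> h1 h2 phi cphi sphi t.
  have a2lt : a2^+2 < 1.
    rewrite lt_neqAle; apply/andP; split; last by have := sqr_ge0 a1; have := sqr_ge0 a3; lra.
    by rewrite sqrf_eq1 negb_or h1 h2.
  set S := Num.sqrt (1 - a2^+2).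
  have Spos : 0 < S by rewrite sqrtr_gt0 subr_gt0.
  have wpos : 0 < w1 a2 b by rewrite sqrtr_gt0; have := sqr_ge0 (b-a2); lra.
  have w2 : w1 a2 b ^+2 = a1^+2 + a3^+2 + (b-a2)^+2.
    rewrite /w1 sqr_sqrtr; have := sqr_ge0 (b-a2); lra.
  set w := w1 a2 b in wpos w2 *.
  have wn0 : w != 0 by rewrite gt_eqF.
  have Sn0 : S != 0 by rewrite gt_eqF.
  rewrite /gamma1 (@X_G _ _ _ _ _ _ ((b-a2)/w) (a1/w) (a3/w) (w*t/2)); first last.
  + by field.
  + by field.
  + by field.
  rewrite e4_G !expmG //; last first.
    have -> : ((b-a2)/w)^+2 + (a1/w)^+2 + (a3/w)^+2 = (a1^+2+a3^+2+(b-a2)^+2)/w^+2 by field.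
    by rewrite -w2 divff // expf_neq0.
  apply/matrixP => i j; rewrite !mxE !big_ord_recr big_ord0 /= !mxE.
  case: i => [[|[|[|i]]] Hi] //; case: j => [[|[|[|j]]] Hj] //=.
  all: rewrite ?mul0r ?mulr0 ?add0r ?addr0 //.
  all: apply/eqP; rewrite eq_complex /=; apply/andP; split; apply/eqP.
  all: rewrite ?cv ?sv ?cosD ?sinD ?cphi ?sphi /n1 /m1 -/w ?expR0.
  all: rewrite -/S.
  all: try by rewrite mulr1 mul0r subr0 mulrC.
  all: field.
  all: by rewrite ?Sn0 ?wn0. }
move=> ha t.
have a22 : a2^+2 = 1 by case: ha => ->; rewrite ?sqrrN expr1n.
have h : a1^+2 + a3^+2 = 0 by lra.
move/eqP: h; rewrite paddr_eq0 ?sqr_ge0 // !sqrf_eq0 => /andP[/eqP a10 /eqP a30].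
rewrite /gamma1 (@X_G _ _ _ _ _ _ 1 0 0 (t*(b-a2)/2)); first last.
+ by rewrite a30; ring.
+ by rewrite a10; ring.
+ by ring.
rewrite e4_G !expmG //.
have -> : -(a2*t)/2 = t*(b-a2)/2 + -(t*b)/2 by ring.
apply/matrixP => i j; rewrite !mxE !big_ord_recr big_ord0 /= !mxE.
case: i => [[|[|[|i]]] Hi] //; case: j => [[|[|[|j]]] Hj] //=.
all: rewrite ?mul0r ?mulr0 ?add0r ?addr0 //.
all: apply/eqP; rewrite eq_complex /=; apply/andP; split; apply/eqP.
all: rewrite ?cosD ?sinD ?expR0.
all: first [by rewrite mulr1 mul0r subr0 mulrC | ring].
Qed.
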